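(* Every almost bipartite cubic graph $G$ with surplus edges $e$ and $f$ has a perfect matching that contains both $e$ and $f$.
   Context: A cubic graph $G$ (multiple edges and loops permitted) is almost bipartite if it is bridgeless, not bipartite, and contains two edges $e$ and $f$ such that $G-\{e,f\}$ is bipartite; such edges $e,f$ are called surplus edges of $G$. *)

(* Defs.v *)
(* A finite multigraph (multiple edges and loops allowed) is
   given by a finite vertex type V, a finite edge type E and two endpoint maps
   src tgt : E -> V (the orientation is arbitrary and irrelevant). *)
From mathcomp Require Import all_boot.
Set Implicit Arguments. Unset Strict Implicit. Unset Printing Implicit Defensive.

Section Multigraph.
Variables (V E : finType) (src tgt : E -> V).

(* degree, loops counted twice *)
Definition deg (v : V) : nat :=
  #|[set c : E | src c == v]| + #|[set c : E | tgt c == v]|.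

Definition cubic : Prop := forall v : V, deg v = 3.

Definition adj_minus (b : E) : rel V :=
  fun x y => [exists c : E, (c != b) &&
     (((src c == x) && (tgt c == y)) || ((src c == y) && (tgt c == x)))].

(* b is a bridge iff its endpoints lie in different components of G - b
   (equivalently, deleting b increases the number of components;
   a loop is never a bridge). *)
Definition is_bridge (b : E) : Prop := ~~ connect (adj_minus b) (src b) (tgt b).

Definition bridgeless : Prop := forall b : E, ~ is_bridge b.

Definition bipartite_on (S : {set E}) : Prop :=
  exists col : V -> bool, forall c : E, c \in S -> col (src c) != col (tgt c).

Definition bipartite : Prop := bipartite_on [set: E].

Definition almost_bipartite_with (e f : E) : Prop :=
  [/\ cubic, bridgeless, ~ bipartite, e != f & bipartite_on (~: [set e; f])].

Definition perfect_matching (M : {set E}) : Prop :=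
  (forall c : E, c \in M -> src c != tgt c) /\
  (forall v : V, #|[set c in M | (src c == v) || (tgt c == v)]| = 1).

End Multigraph.

(* Main.v *)
Require Import Defs.
From mathcomp Require Import all_boot.
From mathcomp Require Import zify.
Set Implicit Arguments. Unset Strict Implicit. Unset Printing Implicit Defensive.

Section Hall.
Variables (T U : finType) (u0 : U).

Definition nbh (R : T -> U -> bool) (X : {set T}) : {set U} :=
  [set y | [exists x in X, R x y]].

Lemma nbhP (R : T -> U -> bool) (X : {set T}) y : reflect (exists2 x, x \in X & R x y) (y \in nbh R X).
Proof. rewrite inE; exact: (iffP exists_inP). Qed.

Lemma hall_ind n : forall (R : T -> U -> bool) (A : {set T}), #|A| <= n ->
  (forall X : {set T}, X \subset A -> #|X| <= #|nbh R X|) ->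
  exists g : T -> U, {in A, forall x, R x (g x)} /\ {in A &, injective g}.
Proof.
elim: n => [|n IH] R A hA hH.
  exists (fun _ => u0); split => x; move: hA; rewrite leqn0 => /eqP/cards0_eq -> ;
    by rewrite inE.
case: (boolP [exists X0 : {set T}, [&& X0 \subset A, X0 != set0, X0 != A &
     #|nbh R X0| <= #|X0|]]).
- case/existsP => X0 /and4P [sXA nX0 XA tX].
  have cX0 : #|X0| < #|A| by apply: proper_card; rewrite properEneq XA.
  have [g1 [g1R g1i]] : exists g : T -> U,
     {in X0, forall x, R x (g x)} /\ {in X0 &, injective g}.
    apply: (IH R X0); first by lia.
    move=> X sX; apply: hH; exact: subset_trans sX sXA.
  pose R2 x z := R x z && (z \notin nbh R X0).
  have [g2 [g2R g2i]] : exists g : T -> U,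
     {in A :\: X0, forall x, R2 x (g x)} /\ {in A :\: X0 &, injective g}.
    apply: (IH R2).
      rewrite cardsD (setIidPr sXA); move: nX0; rewrite -card_gt0; lia.
    move=> Z sZ.
    have h1 := hH (Z :|: X0).
    have h2 : Z :|: X0 \subset A.
      rewrite subUset sXA andbT; apply: subset_trans sZ _; exact: subsetDl.
    have h3 : nbh R (Z :|: X0) \subset nbh R2 Z :|: nbh R X0.
      apply/subsetP => y /nbhP [x]; rewrite inE => /orP [xZ|xX] Rxy; last first.
        by rewrite inE; apply/orP; right; apply/nbhP; exists x.
      rewrite inE; case: (boolP (y \in nbh R X0)) => yN; first by rewrite orbT.
      by apply/orP; left; apply/nbhP; exists x => //; rewrite /R2 Rxy yN.
    have h4 : Z :&: X0 = set0.
      apply/setP => x; rewrite !inE; apply/negP => /andP [xZ xX].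
      by move/subsetP: sZ => /(_ x xZ); rewrite inE xX.
    have h5 := cardsUI Z X0; rewrite h4 cards0 in h5.
    have h6 := subset_leq_card h3.
    have h7 := leq_card_setU (nbh R2 Z) (nbh R X0).
    move: (h1 h2) h6 h7 => /= h8 h6 [h7 _]; lia.
  exists (fun x => if x \in X0 then g1 x else g2 x); split.
    move=> x xA; case: ifP => xX; first exact: g1R.
    by have := g2R x; rewrite inE xX xA => /(_ isT) /andP [].
  move=> x y xA yA; case: ifP => xX; case: ifP => yX.
  + exact: g1i.
  + move=> e; have := g2R y; rewrite inE yX yA => /(_ isT) /andP [_].
    by rewrite -e; move/negP; case; apply/nbhP; exists x => //; exact: g1R.
  + move=> e; have := g2R x; rewrite inE xX xA => /(_ isT) /andP [_].
    by rewrite e; move/negP; case; apply/nbhP; exists y => //; exact: g1R.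
  + by apply: g2i; rewrite inE ?xX ?yX.
- rewrite negb_exists => /forallP hN.
  case: (set_0Vmem A) => [A0|[a aA]].
    by exists (fun _ => u0); split => x; rewrite A0 inE.
  have : 0 < #|nbh R [set a]|.
    apply: leq_trans (hH _ _); first by rewrite cards1.
    by rewrite sub1set.
  rewrite card_gt0 => /set0Pn [y /nbhP [a']]; rewrite inE => /eqP -> Ray.
  pose R1 x z := R x z && (z != y).
  have [g1 [g1R g1i]] : exists g : T -> U,
     {in A :\ a, forall x, R1 x (g x)} /\ {in A :\ a &, injective g}.
    apply: (IH R1).
      rewrite cardsD (setIidPr _) ?sub1set // cards1.
      have : 0 < #|A| by rewrite card_gt0; apply/set0Pn; exists a.
      lia.
    move=> X sX.
    case: (set_0Vmem X) => [->|[x0 x0X]]; first by rewrite cards0.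
    have sXA : X \subset A by apply: subset_trans sX _; exact: subsetDl.
    have nX0 : X != set0 by apply/set0Pn; exists x0.
    have XA : X != A.
      apply/negP => /eqP XA; move/subsetP: sX => /(_ a); rewrite XA aA.
      by rewrite !inE eqxx => /(_ isT).
    move: (hN X); rewrite sXA nX0 XA /= -ltnNge => lt.
    have h3 : nbh R X \subset nbh R1 X :|: [set y].
      apply/subsetP => z /nbhP [x xX Rxz]; rewrite !inE.
      case: (boolP (z == y)) => zy; first by rewrite orbT.
      rewrite orbF; apply/existsP; exists x.
      by rewrite xX /R1 Rxz zy.
    have h6 := subset_leq_card h3.
    have [h7 _] := leq_card_setU (nbh R1 X) [set y].
    rewrite cards1 in h7; lia.
  exists (fun x => if x == a then y else g1 x); split.
    move=> x xA; case: ifP => [/eqP -> //|xa].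
    by have := g1R x; rewrite !inE xa xA => /(_ isT) /andP [].
  move=> x z xA zA; case: ifP => xa; case: ifP => za.
  + by rewrite (eqP xa) (eqP za).
  + move=> e; have := g1R z; rewrite !inE za zA => /(_ isT) /andP [_].
    by rewrite e eqxx.
  + move=> e; have := g1R x; rewrite !inE xa xA => /(_ isT) /andP [_].
    by rewrite e eqxx.
  + by apply: g1i; rewrite !inE ?xa ?za.
Qed.

End Hall.
Section Graph.
Variables (V E : finType) (src tgt : E -> V).

Lemma card_sum (P : pred E) : #|[set c | P c]| = \sum_c (P c : nat).
Proof.
rewrite -sum1_card big_mkcond /=; apply: eq_bigr => c _; rewrite inE; by case: (P c).
Qed.

Lemma sum_eq1 (S : {set V}) x : \sum_(v in S) (x == v : nat) = (x \in S).
Proof.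
case xS: (x \in S).
  rewrite (bigD1 x) //= eqxx big1 // => v /andP [_ vx]; by rewrite eq_sym (negbTE vx).
rewrite big1 // => v vS; case: eqP => // e; subst; by rewrite vS in xS.
Qed.

Lemma degsum (cub : cubic src tgt) (S : {set V}) :
  \sum_c ((src c \in S) + (tgt c \in S)) = 3 * #|S|.
Proof.
have -> : 3 * #|S| = \sum_(v in S) deg src tgt v.
  transitivity (\sum_(v in S) 3); first by rewrite sum_nat_const mulnC.
  by apply: eq_bigr => v _; rewrite cub.
rewrite /deg.
rewrite (eq_bigr (fun v => \sum_c (src c == v : nat) + \sum_c (tgt c == v : nat))); last first.
  by move=> v _; rewrite !card_sum.
rewrite [RHS]big_split [LHS]big_split /= [X in _ = X + _]exchange_big [X in _ = _ + X]exchange_big /=.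
congr (_ + _); apply: eq_bigr => c _; by rewrite sum_eq1.
Qed.
Lemma handshake (cub : cubic src tgt) (S : {set V}) :
  3 * #|S| = 2 * #|[set c | (src c \in S) && (tgt c \in S)]|
             + #|[set c | (src c \in S) != (tgt c \in S)]|.
Proof.
rewrite -degsum // !card_sum big_distrr /= -big_split /=; apply: eq_bigr => c _.
by case: (src c \in S); case: (tgt c \in S).
Qed.

Lemma cut1_bridge (S : {set V}) :
  #|[set c | (src c \in S) != (tgt c \in S)]| = 1 -> ~ bridgeless src tgt.
Proof.
move/eqP/cards1P => [c hc] hb; apply: (hb c); apply/negP => hcon.
have cc : c \in [set c | (src c \in S) != (tgt c \in S)] by rewrite hc set11.
rewrite inE in cc.
have cl : closed (adj_minus src tgt c) S.
  move=> x y /existsP [d /andP [dc hd]].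
  have : d \notin [set c0 | (src c0 \in S) != (tgt c0 \in S)] by rewrite hc inE.
  rewrite inE negbK => /eqP sd.
  by case/orP: hd => /andP [/eqP <- /eqP <-].
by rewrite (closed_connect cl hcon) eqxx in cc.
Qed.

Lemma noloop (cub : cubic src tgt) (br : bridgeless src tgt) c : src c != tgt c.
Proof.
apply/negP => /eqP l.
have h := handshake cub [set src c].
have : 1 <= #|[set d | (src d \in [set src c]) && (tgt d \in [set src c])]|.
  by rewrite card_gt0; apply/set0Pn; exists c; rewrite !inE l eqxx.
rewrite cards1 in h => h1.
apply: (@cut1_bridge [set src c]) => //; lia.
Qed.


Lemma sum_ind (g : E) k : \sum_c ((c == g) * k) = k.
Proof.
rewrite (bigD1 g) //= eqxx mul1n big1 ?addn0 // => c /negbTE ->; by rewrite mul0n.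
Qed.

Lemma sum_ind1 (g : E) : \sum_c (c == g : nat) = 1.
Proof. by rewrite -[RHS](sum_ind g 1); apply: eq_bigr => c _; rewrite muln1. Qed.

Lemma ef_colors (cub : cubic src tgt) (col : V -> bool) e f : e != f ->
  (forall c, c != e -> c != f -> col (src c) != col (tgt c)) ->
  ~ bipartite src tgt ->
  (col (src e) && col (tgt e) && ~~ col (src f) && ~~ col (tgt f)) ||
  (~~ col (src e) && ~~ col (tgt e) && col (src f) && col (tgt f)).
Proof.
move=> ef hcol nbip.
have hA : \sum_c (col (src c) + col (tgt c)) = 3 * #|[set v | col v]|.
  by rewrite -degsum //; apply: eq_bigr => c _; rewrite !inE.
have hB : \sum_c (~~ col (src c) + ~~ col (tgt c)) = 3 * #|~: [set v | col v]|.
  by rewrite -degsum //; apply: eq_bigr => c _; rewrite !inE.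
have key : \sum_c ((col (src c) + col (tgt c)) + ((c == e) * (~~ col (src e) + ~~ col (tgt e))
              + (c == f) * (~~ col (src f) + ~~ col (tgt f))))
         = \sum_c ((~~ col (src c) + ~~ col (tgt c)) + ((c == e) * (col (src e) + col (tgt e))
              + (c == f) * (col (src f) + col (tgt f)))).
  apply: eq_bigr => c _.
  case: (c =P e) => [->|/eqP ce].
    rewrite (negbTE ef) /= !mul1n !mul0n !addn0 addnC //.
  case: (c =P f) => [->|/eqP cf].
    rewrite /= !mul1n !mul0n !add0n addnC //.
  rewrite !mul0n !addn0.
  by move: (hcol c ce cf); case: (col (src c)); case: (col (tgt c)).
rewrite !big_split /= !sum_ind in key.
rewrite !big_split /= in hA hB.
have nb : ~~ ((col (src e) != col (tgt e)) && (col (src f) != col (tgt f))).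
  apply/negP => /andP [he hf]; apply: nbip; exists col => c _.
  case: (c =P e) => [->//|/eqP ce]; case: (c =P f) => [->//|/eqP cf]; exact: hcol.
move: key nb.
case: (col (src e)); case: (col (tgt e)); case: (col (src f)); case: (col (tgt f)) => //= key _; lia.
Qed.

Lemma bool_id (sX sY sF tX tY tF cs ct isf ise : bool) :
  (sX ==> cs) -> (tX ==> ct) -> (sY ==> ~~cs) -> (tY ==> ~~ct) -> (sF ==> ~~cs) -> (tF ==> ~~ct) ->
  (sY ==> ~~sF) -> (tY ==> ~~tF) ->
  (ise ==> [&& ~~isf, ~~sX, ~~tX, cs & ct]) ->
  (isf ==> [&& sF, tF, ~~sY & ~~tY]) ->
  (~~ise ==> ~~isf ==> [&& cs != ct, (sX && ~~ct) ==> (tY || tF) & (tX && ~~cs) ==> (sY || sF)]) ->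
  ((sX || sY || sF) != (tX || tY || tF)) + (sX + tX) + (isf + isf) = (sY + tY) + (sF + tF).
Proof.
by case: sX; case: sY; case: sF; case: tX; case: tY; case: tF; case: cs; case: ct; case: isf; case: ise.
Qed.

Definition btw (c : E) (x y : V) :=
  ((src c == x) && (tgt c == y)) || ((src c == y) && (tgt c == x)).
Definition side (p : V -> bool) (g : E) : {set V} :=
  [set v | p v && (v != src g) && (v != tgt g)].
Definition Rel (p : V -> bool) (e f : E) (x y : V) : bool :=
  [exists c, (c != e) && (c != f) && btw c x y] && (x \in side p e)
  && (y \in side (fun v => ~~ p v) f).

Lemma degsum' (cub : cubic src tgt) (S : {set V}) :
  \sum_c (src c \in S : nat) + \sum_c (tgt c \in S : nat) = 3 * #|S|.
Proof. by rewrite -big_split; exact: degsum. Qed.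

Lemma hallcond (cub : cubic src tgt) (br : bridgeless src tgt) (p : V -> bool) e f :
  e != f -> p (src e) -> p (tgt e) -> ~~ p (src f) -> ~~ p (tgt f) ->
  (forall c, c != e -> c != f -> p (src c) != p (tgt c)) ->
  forall X : {set V}, X \subset side p e -> #|X| <= #|nbh (Rel p e f) X|.
Proof.
move=> ef pse pte psf ptf hcol X sX; rewrite leqNgt; apply/negP => lt.
set Y := nbh (Rel p e f) X.
set F := [set src f; tgt f].
set S := X :|: Y :|: F.
have XP v : v \in X -> [&& p v, v != src e & v != tgt e].
  by move=> vX; move/subsetP: sX => /(_ v vX); rewrite inE andbA.
have YP v : v \in Y -> [&& ~~ p v, v != src f & v != tgt f].
  by case/nbhP => x _ /andP [_]; rewrite inE andbA.
have FP v : v \in F -> ~~ p v.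
  by rewrite !inE => /orP [] /eqP ->.
have FP2 v : v != src f -> v != tgt f -> v \notin F.
  by move=> h1 h2; rewrite !inE negb_or h1 h2.
have Fs : src f \in F by rewrite !inE eqxx.
have Ft : tgt f \in F by rewrite !inE eqxx orbT.
have hF : #|F| <= 2 by rewrite cards2; case: (src f != tgt f).
clearbody F.
have memY x y c : x \in X -> c != e -> c != f -> btw c x y -> ~~ p y ->
    y \notin F -> y \in Y.
  move=> xX ce cf b py yF; apply/nbhP; exists x => //.
  rewrite /Rel; apply/andP; split; first (apply/andP; split).
  - by apply/existsP; exists c; rewrite ce cf b.
  - by move/subsetP: sX; apply.
  - rewrite inE py /=; apply/andP; split; apply/negP => /eqP yf; move: yF;
    by rewrite yf ?Fs ?Ft.
have pw c : ((src c \in S) != (tgt c \in S)) + ((src c \in X) + (tgt c \in X))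
     + ((c == f) + (c == f)) = ((src c \in Y) + (tgt c \in Y)) + ((src c \in F) + (tgt c \in F)).
  rewrite /S !in_setU.
  apply: (bool_id (cs := p (src c)) (ct := p (tgt c)) (ise := c == e)).
  - by apply/implyP => /XP /and3P [].
  - by apply/implyP => /XP /and3P [].
  - by apply/implyP => /YP /and3P [].
  - by apply/implyP => /YP /and3P [].
  - by apply/implyP; apply: FP.
  - by apply/implyP; apply: FP.
  - by apply/implyP => /YP /and3P [_ h1 h2]; apply: FP2.
  - by apply/implyP => /YP /and3P [_ h1 h2]; apply: FP2.
  - apply/implyP => /eqP ->; rewrite (negbTE ef) pse pte /= ?andbT.
    apply/andP; split; apply/negP => /XP /and3P [_]; by rewrite eqxx ?andbF.
  - apply/implyP => /eqP ->; rewrite Fs Ft /= ?andbT.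
    apply/andP; split; apply/negP => /YP /and3P [_]; by rewrite eqxx ?andbF.
  - apply/implyP => ce; apply/implyP => cf.
    rewrite (hcol c ce cf) /=; apply/andP; split; apply/implyP => /andP [hX hp].
      case: (boolP (tgt c \in F)) => hF0; first by rewrite orbT.
      by rewrite (memY (src c) (tgt c) c) //; rewrite /btw !eqxx.
    case: (boolP (src c \in F)) => hF0; first by rewrite orbT.
    by rewrite (memY (tgt c) (src c) c) //; rewrite /btw !eqxx orbT.
have : \sum_c (((src c \in S) != (tgt c \in S)) + ((src c \in X) + (tgt c \in X))
     + ((c == f) + (c == f))) = \sum_c (((src c \in Y) + (tgt c \in Y)) + ((src c \in F) + (tgt c \in F))).
  by apply: eq_bigr => c _; exact: pw.
rewrite !big_split /= !sum_ind1 !degsum' // -card_sum => h.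
apply: (@cut1_bridge S) => //; rewrite /Y in h; lia.
Qed.


Lemma btw_inc c x y v : btw c x y ->
  ((src c == v) || (tgt c == v)) = (v == x) || (v == y).
Proof.
by case/orP => /andP [/eqP -> /eqP ->]; rewrite ?(eq_sym x) ?(eq_sym y) // orbC.
Qed.

Lemma side_nn (p : V -> bool) g : side (fun v => ~~ ~~ p v) g = side p g.
Proof. by apply/setP => v; rewrite !inE negbK. Qed.

Lemma main_pm (cub : cubic src tgt) (br : bridgeless src tgt) (p : V -> bool) e f :
  e != f -> p (src e) -> p (tgt e) -> ~~ p (src f) -> ~~ p (tgt f) ->
  (forall c, c != e -> c != f -> p (src c) != p (tgt c)) ->
  exists M : {set E}, perfect_matching src tgt M /\ e \in M /\ f \in M.
Proof.
move=> ef pse pte psf ptf hcol.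
set A' := side p e.
set B' := side (fun v => ~~ p v) f.
have [g [gR gi]] := hall_ind (src e) (max_card (mem A'))
   (hallcond cub br ef pse pte psf ptf hcol).
have [g' [gR' gi']] : exists g' : V -> V,
    {in B', forall y, Rel (fun v => ~~ p v) f e y (g' y)} /\ {in B' &, injective g'}.
  apply: (hall_ind (src e) (max_card (mem B'))).
  apply: hallcond => //; first by rewrite eq_sym.
  - by rewrite negbK.
  - by rewrite negbK.
  - by move=> c cf ce; move: (hcol c ce cf); case: (p (src c)); case: (p (tgt c)).
have AP x : x \in A' -> [&& p x, x != src e & x != tgt e].
  by rewrite inE andbA.
have BP x : x \in B' -> [&& ~~ p x, x != src f & x != tgt f].
  by rewrite inE andbA.
have gB x : x \in A' -> g x \in B'.
  by move=> /gR /andP [_].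
have cardBA : #|B'| <= #|A'|.
  rewrite -(card_in_imset gi'); apply: subset_leq_card; apply/subsetP => z.
  case/imsetP => y yB ->; have := gR' y yB; case/andP => _.
  by rewrite side_nn.
have imA : [set g x | x in A'] = B'.
  apply/eqP; rewrite eqEcard (card_in_imset gi) cardBA andbT.
  by apply/subsetP => z /imsetP [x xA ->]; exact: gB.
pose h x := odflt e [pick c | (c != e) && (c != f) && btw c x (g x)].
have hP x : x \in A' -> [&& h x != e, h x != f & btw (h x) x (g x)].
  move=> xA; rewrite /h; case: pickP => [c /andP [/andP [-> ->] ->] //|none].
  have := gR x xA; case/andP => /andP [/existsP [c hc] _] _.
  by have := none c; rewrite hc.
have hinc x v : x \in A' -> ((src (h x) == v) || (tgt (h x) == v)) = (v == x) || (v == g x).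
  by move=> xA; case/and3P: (hP x xA) => _ _ /btw_inc ->.
set M := [set e; f] :|: [set h x | x in A'].
have Mcase c : c \in M -> [\/ c = e, c = f | exists2 x, x \in A' & c = h x].
  rewrite !inE -orbA => /or3P [/eqP ->|/eqP ->|/imsetP [x xA ->]].
  - by constructor 1.
  - by constructor 2.
  - by constructor 3; exists x.
have eM : e \in M by rewrite !inE eqxx.
have fM : f \in M by rewrite !inE eqxx orbT.
have hM x : x \in A' -> h x \in M.
  by move=> xA; rewrite in_setU; apply/orP; right; apply/imsetP; exists x.
have ince v : ((src e == v) || (tgt e == v)) = (v == src e) || (v == tgt e).
  by rewrite !(eq_sym v).
have incf v : ((src f == v) || (tgt f == v)) = (v == src f) || (v == tgt f).
  by rewrite !(eq_sym v).
clearbody M.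
exists M; split; last by [].
split.
  by move=> c _; exact: (noloop cub br).
move=> v; apply/eqP/cards1P.
case pv: (p v).
  have notB y : y \in B' -> (v == y) = false.
    by move=> /BP /and3P [py _ _]; apply/negP => /eqP ey; rewrite -ey pv in py.
  case vA: (v \in A').
    exists (h v); apply/setP => c; rewrite !inE.
    apply/andP/eqP => [[cM ic]|->].
      case: (Mcase c cM) => [ce|cf|[x xA cx]]; subst c.
      - move: ic; rewrite ince => hv.
        by move: vA; rewrite inE pv /=; case/orP: hv => /eqP ->; rewrite eqxx ?andbF.
      - move: ic; rewrite incf => /orP [] /eqP vf; move: pv; by rewrite vf ?(negbTE psf) ?(negbTE ptf).
      - by move: ic; rewrite (hinc x v xA) (notB (g x)) ?gB // orbF => /eqP ->.
    by rewrite hM // hinc // eqxx.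
  exists e; apply/setP => c; rewrite !inE.
  apply/andP/eqP => [[cM ic]|->].
    case: (Mcase c cM) => [ce|cf|[x xA cx]]; subst c => //.
    - move: ic; rewrite incf => /orP [] /eqP vf; move: pv; by rewrite vf ?(negbTE psf) ?(negbTE ptf).
    - move: ic; rewrite (hinc x v xA) (notB (g x)) ?gB // orbF => /eqP vx.
      by rewrite vx xA in vA.
  split => //; rewrite ince; move: vA; rewrite inE pv /=.
  by case: (v == src e); case: (v == tgt e).
have notA y : y \in A' -> (v == y) = false.
  by move=> /AP /and3P [py _ _]; apply/negP => /eqP ey; rewrite -ey pv in py.
case vB: (v \in B').
  move: vB; rewrite -imA => /imsetP [x0 x0A vx0].
  exists (h x0); apply/setP => c; rewrite !inE.
  apply/andP/eqP => [[cM ic]|->].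
    case: (Mcase c cM) => [ce|cf|[x xA cx]]; subst c.
    - move: ic; rewrite ince => /orP [] /eqP ve; move: pv; by rewrite ve ?pse ?pte.
    - move: ic; rewrite incf vx0 => hv; move: (gB x0 x0A) => /BP /and3P [_].
      by case/orP: hv => /eqP ->; rewrite eqxx.
    - move: ic; rewrite (hinc x v xA) notA //= vx0 => /eqP gx.
      by rewrite (gi x0 x x0A xA gx).
  by rewrite hM // hinc // vx0 eqxx orbT.
exists f; apply/setP => c; rewrite !inE.
apply/andP/eqP => [[cM ic]|->].
  case: (Mcase c cM) => [ce|cf|[x xA cx]]; subst c => //.
  - move: ic; rewrite ince => /orP [] /eqP ve; move: pv; by rewrite ve ?pse ?pte.
  - move: ic; rewrite (hinc x v xA) notA //= => /eqP vx.
    by move: vB; rewrite -imA vx; move/negP; case; apply/imsetP; exists x.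
split => //; rewrite incf; move: vB; rewrite inE pv /=.
by case: (v == src f); case: (v == tgt f).
Qed.

End Graph.

Theorem proposition4p3 (V E : finType) (src tgt : E -> V) (e f : E) :
  almost_bipartite_with src tgt e f ->
  exists M : {set E}, perfect_matching src tgt M /\ e \in M /\ f \in M.
Proof.
case => cub br nbip ef [col hcol].
have hcol' c : c != e -> c != f -> col (src c) != col (tgt c).
  by move=> ce cf; apply: hcol; rewrite !inE negb_or ce cf.
case/orP: (ef_colors cub ef hcol' nbip) => /andP [/andP [/andP [h1 h2] h3] h4].
  exact: (main_pm cub br ef h1 h2 h3 h4 hcol').
have fe : f != e by rewrite eq_sym.
have [M [pm [fM eM]]] := main_pm cub br fe h3 h4 h1 h2 (fun c cf ce => hcol' c ce cf).
by exists M.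
Qed.
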